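(* Let $N=pq$ where $p<q$ are primes. Let $f\in\mathbb{Z}[X]$ and $d:=\deg f$. Let $n$ be the number of distinct zeros of $f$ modulo $p$ and $m$ the number of distinct zeros of $f$ modulo $q$. Then: (1) $\nu(f)=mp+nq-2nm$. (2) If $f\neq 0$ in $\mathbb{Z}_p[X]$ and in $\mathbb{Z}_q[X]$, and $d<p/2$, then $\nu(f)\leq dp+dq-2d^2$.
   Context: $Z_N=\{0,1,\dots,N-1\}$ and $\mathbb{Z}_n=\mathbb{Z}/n\mathbb{Z}$. For $g\in\mathbb{Z}[X]$, an element $x\in Z_N$ is called suitable for $g$ if $1<\gcd(g(x),N)<N$, and $\nu(g)$ denotes the number of $x\in Z_N$ suitable for $g$. *)

(* Defs.v *)
From HB Require Import structures.
From mathcomp Require Import all_boot all_order all_algebra.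
Set Implicit Arguments. Unset Strict Implicit. Unset Printing Implicit Defensive.
Import Order.TTheory GRing.Theory Num.Theory.
Local Open Scope ring_scope.

Definition suitable (N : nat) (g : {poly int}) (x : nat) : bool :=
  (1 < gcdn `|g.[x%:Z]|%N N < N)%N.

Definition nu (N : nat) (g : {poly int}) : nat :=
  #|[set x : 'I_N | suitable N g x]|.

Definition nzeros_mod (p : nat) (g : {poly int}) : nat :=
  #|[set x : 'I_p | (p%:Z %| g.[(x : nat)%:Z])%Z]|.

Definition red_poly (p : nat) (g : {poly int}) : {poly 'F_p} :=
  map_poly (fun c : int => c%:~R) g.

(* Main.v *)
Require Import Defs.
From HB Require Import structures.
From mathcomp Require Import all_boot all_order all_algebra.
From mathcomp Require Import zify ring.
Import Order.TTheory GRing.Theory Num.Theory.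
Local Open Scope ring_scope.

Lemma Fp_intr_eq0 (p : nat) (z : int) : prime p ->
  ((z%:~R : 'F_p) == 0) = (p%:Z %| z)%Z.
Proof.
move=> pp; rewrite dvdzE /=.
have H (n : nat) : ((n%:R : 'F_p) == 0) = (p %| n)%N.
  have := val_Fp_nat pp n.
  rewrite /dvdn => h; apply/eqP/eqP => [/(congr1 val) /= e|e].
    by rewrite -h e.
  by apply: val_inj; rewrite /= h e.
case: z => n; first by rewrite -pmulrn H.
by rewrite NegzE mulrNz oppr_eq0 -pmulrn H.
Qed.

Lemma red_horner (p : nat) (f : {poly int}) (x : nat) :
  ((f.[x%:Z])%:~R : 'F_p) = (red_poly p f).[x%:R].
Proof.
rewrite /red_poly -[x%:R]/((x%:Z)%:~R : 'F_p).
by rewrite (horner_map (intr : int -> GRing.Zmodule.sort _)).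

Qed.

Lemma ineq (n m a b c e d : nat) : d = (n + a)%N -> d = (m + b)%N ->
  ((n*(b+e+c+d) + (a+c+d) * m)%N%:Z <= (d*(2*d+c))%N%:Z + (d*(2*d+c+e))%N%:Z - 2*(d*d)%N%:Z).
Proof.
move=> ea eb.
have hn : n%:Z = d%:Z - a%:Z by rewrite ea PoszD addrK.
have hm : m%:Z = d%:Z - b%:Z by rewrite eb PoszD addrK.
rewrite !(PoszD, PoszM) hn hm -subr_ge0.
set D := Posz d; set A := Posz a; set B := Posz b; set C := Posz c; set E := Posz e.
have -> : D * (2%:Z * D + C) + D * (2%:Z * D + C + E) - 2 * (D * D) -
   ((D - A) * (B + E + C + D) + (A + C + D) * (D - B)) = B * C + A * (C + E) + 2%:Z * A * B.
  ring.
by rewrite !addr_ge0 ?mulr_ge0.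
Qed.

Definition Pd (p : nat) (f : {poly int}) (x : nat) : bool := (p%:Z %| f.[x%:Z])%Z.

Lemma Pd_root p f x : prime p -> Pd p f x = root (red_poly p f) x%:R.
Proof. by move=> pp; rewrite /Pd /root -red_horner Fp_intr_eq0. Qed.

Lemma Pd_mod p f x : prime p -> Pd p f (x %% p) = Pd p f x.
Proof. by move=> pp; rewrite !Pd_root // Fp_nat_mod. Qed.

Lemma nzeros_le p f : prime p -> red_poly p f != 0 ->
  (nzeros_mod p f <= (size f).-1)%N.
Proof.
move=> pp nz.
pose S := [set x : 'I_p | (p%:Z %| f.[(x : nat)%:Z])%Z].
pose rs := map (fun x : 'I_p => ((x : nat)%:R : 'F_p)) (enum S).
have hs : size rs = #|S| by rewrite size_map cardE.
have hu : uniq rs.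
  rewrite map_inj_uniq ?enum_uniq // => x y e.
  have hx := val_Fp_nat pp x; have hy := val_Fp_nat pp y.
  apply: val_inj; rewrite /= -(modn_small (ltn_ord x)) -(modn_small (ltn_ord y)).
  by rewrite -hx -hy e.
have ha : all (root (red_poly p f)) rs.
  apply/allP => z /mapP [x]; rewrite mem_enum inE => hx ->.
  by rewrite -Pd_root.
have := max_poly_roots nz ha hu.
have : (size (red_poly p f) <= size f)%N by rewrite /red_poly /map_poly size_poly.
rewrite /nzeros_mod -/S -hs.
move: (size rs) (size (red_poly p f)) (size f) => a b c; lia.
Qed.

Lemma suitableE p q f x : prime p -> prime q -> p != q ->
  suitable (p * q) f x = (Pd p f x != Pd q f x).
Proof.
move=> pp pq npq.
have cpq : coprime p q by rewrite prime_coprime // dvdn_prime2 //.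
rewrite /suitable /Pd !dvdzE /=.
set a := `|f.[x%:Z]|%N.
have N0 : (0 < p * q)%N by rewrite muln_gt0 !prime_gt0.
have gle : (gcdn a (p * q) <= p * q)%N by apply: dvdn_leq => //; apply: dvdn_gcdr.
have g0 : (0 < gcdn a (p * q))%N by rewrite gcdn_gt0 N0 orbT.
have e1 : (gcdn a (p * q) == 1%N) = ~~ (p %| a)%N && ~~ (q %| a)%N.
  by rewrite -/(coprime _ _) coprimeMr !(coprime_sym a) !prime_coprime.
have e2 : (gcdn a (p * q) == p * q)%N = (p %| a)%N && (q %| a)%N.
  by rewrite -Gauss_dvd //; apply/eqP/idP => [<-|/gcdn_idPr //]; apply: dvdn_gcdl.
have -> : (1 < gcdn a (p * q))%N = (gcdn a (p * q) != 1%N).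
  by move: g0; case: (gcdn a (p * q)) => [|[|]].
have -> : (gcdn a (p * q) < p * q)%N = (gcdn a (p * q) != p * q)%N.
  by rewrite ltn_neqAle gle andbT.
by rewrite e1 e2; case: (p %| a)%N; case: (q %| a)%N.
Qed.

Lemma nu_count p q f : prime p -> prime q -> p != q ->
  nu (p * q) f = (nzeros_mod p f * (q - nzeros_mod q f) + (p - nzeros_mod p f) * nzeros_mod q f)%N.
Proof.
move=> pp pq npq.
have cpq : coprime p q by rewrite prime_coprime // dvdn_prime2 //.
have p0 := prime_gt0 pp; have q0 := prime_gt0 pq.
pose h (x : 'I_(p * q)) : 'I_p * 'I_q := (Ordinal (ltn_pmod x p0), Ordinal (ltn_pmod x q0)).
have hinj : injective h.
  move=> x y [] /= ex ey; apply: val_inj => /=.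
  have : (x == y %[mod p * q])%N by rewrite chinese_remainder // ex ey !eqxx.
  by rewrite !modn_small // => /eqP.
have hbij : bijective h by apply: inj_card_bij => //; rewrite card_prod !card_ord.
pose SA := [set x : 'I_p | Pd p f x]; pose SB := [set x : 'I_q | Pd q f x].
pose S := setX SA (~: SB) :|: setX (~: SA) SB.
have e : [set x : 'I_(p * q) | suitable (p * q) f x] = h @^-1: S.
  apply/setP => x; rewrite !inE suitableE // /= (Pd_mod _ _ _ pp) (Pd_mod _ _ _ pq).
  by case: (Pd p f _); case: (Pd q f _).
have hA : nzeros_mod p f = #|SA| by [].
have hB : nzeros_mod q f = #|SB| by [].
rewrite /nu e on_card_preimset; last exact: onW_bij.
rewrite cardsU.
have -> : setX SA (~: SB) :&: setX (~: SA) SB = set0.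
  by apply/setP => -[a b]; rewrite !inE /=; case: (Pd p f a); case: (Pd q f b).
rewrite (@cards0 (prod 'I_p 'I_q)) subn0 !cardsX hA hB.
have c1 : (#|SA| + #|~: SA| = p)%N by rewrite cardsC card_ord.
have c2 : (#|SB| + #|~: SB| = q)%N by rewrite cardsC card_ord.
move: #|SA| #|SB| #|~: SA| #|~: SB| c1 c2 => a b c d0 c1 c2.
rewrite -c1 -c2 !addKn //.
Qed.

Theorem theorem2p8 (p q : nat) (f : {poly int}) :
  prime p -> prime q -> (p < q)%N ->
  let N := (p * q)%N in
  let d := (size f).-1 in
  let n := nzeros_mod p f in
  let m := nzeros_mod q f in
  ((nu N f)%:Z = (m * p)%:Z + (n * q)%:Z - 2 * (n * m)%:Z)
  /\
  (red_poly p f != 0 -> red_poly q f != 0 -> (2 * d < p)%N ->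
     ((nu N f)%:Z <= (d * p)%:Z + (d * q)%:Z - 2 * (d * d)%:Z)).
Proof.
move=> pp pq ltpq N d n m.
have npq : p != q by rewrite neq_ltn ltpq.
have hnu : nu N f = (n * (q - m) + (p - n) * m)%N by exact: nu_count.
have hn : (n <= p)%N by rewrite /n /nzeros_mod; apply: leq_trans (max_card _) _; rewrite card_ord.
have hm : (m <= q)%N by rewrite /m /nzeros_mod; apply: leq_trans (max_card _) _; rewrite card_ord.
split.
  rewrite hnu; clear hnu; move: hn hm; move: n m => a b ha hb.
  have -> : (a * (q - b) = a * q - a * b)%N by rewrite mulnBr.
  have -> : ((p - a) * b = p * b - a * b)%N by rewrite mulnBl.
  have h1 : (a * b <= a * q)%N by rewrite leq_mul2l hb orbT.
  have h2 : (a * b <= p * b)%N by rewrite leq_mul2r ha orbT.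
  rewrite (mulnC b p).
  move: (a * q)%N (p * b)%N (a * b)%N h1 h2 => X Y Z h1 h2.
  lia.
move=> nzp nzq hd.
have dn : (n <= d)%N by exact: nzeros_le.
have dm : (m <= d)%N by exact: nzeros_le.
have [a ea] : exists a, d = (n + a)%N by exists (d - n)%N; lia.
have [b eb] : exists b, d = (m + b)%N by exists (d - m)%N; lia.
have [c ec] : exists c, p = (2 * d + c.+1)%N by exists (p - (2 * d).+1)%N; lia.
have [e ee] : exists e, q = (p + e.+1)%N by exists (q - p.+1)%N; lia.
rewrite hnu; clear hnu.
clearbody N d n m.
have hq : (q - m = (d - m) + e.+1 + c.+1 + d)%N by lia.
have hp : (p - n = (d - n) + c.+1 + d)%N by lia.
rewrite hq hp.
have -> : (d - m = b)%N by lia.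
have -> : (d - n = a)%N by lia.
subst p q.
exact: ineq.
Qed.
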